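(* Let $G$ be an open localic groupoid and let $X_1,X_2$ be principal $G$-bundles over locales $M_1$ and $M_2$ respectively. Then every equivariant map $f:X_1\to X_2$ induces a map of locales $f/G:M_1\to M_2$ (compatible with the bundle maps). Furthermore, $f$ is an isomorphism if and only if $f/G$ is an isomorphism, and $f$ is open if and only if $f/G$ is open.
   Context: An open localic groupoid $G$ has locales $G_0,G_1$ with structure maps, domain map $d$ open. A left $G$-locale is a locale $X$ with anchor $p:X\to G_0$ and associative unital action $a:G_1\times_{G_0}X\to X$; an equivariant map commutes with anchors and actions. A principal $G$-bundle over a locale $M$ is a $G$-locale with $\pi:X\to M$ such that $\pi\circ a=\pi\circ\pi_2$, $\langle a,\pi_2\rangle:G_1\times_{G_0}X\to X\times_MX$ is an isomorphism, and $\pi$ is an open surjection; then $M$ is isomorphic to the orbit locale $X/G$, the coequalizer of $a$ and $\pi_2$. *)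

(* Defs.v *)
Set Implicit Arguments.
Unset Strict Implicit.

Record frame := Frame {
  carrier :> Type;
  fle : carrier -> carrier -> Prop;
  fmeet : carrier -> carrier -> carrier;
  fjoin : (carrier -> Prop) -> carrier;
  fle_refl : forall a, fle a a;
  fle_trans : forall a b c, fle a b -> fle b c -> fle a c;
  fle_antisym : forall a b, fle a b -> fle b a -> a = b;
  fmeet_glb : forall a b c, fle c (fmeet a b) <-> (fle c a /\ fle c b);
  fjoin_lub : forall (S : carrier -> Prop) c,
      fle (fjoin S) c <-> (forall a, S a -> fle a c);
  fdistrib : forall a (S : carrier -> Prop),
      fmeet a (fjoin S) = fjoin (fun c => exists s, S s /\ c = fmeet a s)
}.

Definition ftop (F : frame) : F := fjoin (fun _ : F => True).

(* ---------- Locale maps X -> Y = frame homomorphisms O(Y) -> O(X) ---------- *)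
Record lmap (X Y : frame) := LMap {
  finv : Y -> X;
  finv_top : finv (ftop Y) = ftop X;
  finv_meet : forall a b, finv (fmeet a b) = fmeet (finv a) (finv b);
  finv_join : forall (S : Y -> Prop),
      finv (fjoin S) = fjoin (fun x => exists s, S s /\ x = finv s)
}.





Lemma lcomp_top (X Y Z : frame) (f : lmap X Y) (g : lmap Y Z) :
  finv f (finv g (ftop Z)) = ftop X.
Proof. rewrite finv_top, finv_top. reflexivity. Qed.

Lemma lcomp_meet (X Y Z : frame) (f : lmap X Y) (g : lmap Y Z) a b :
  finv f (finv g (fmeet a b)) = fmeet (finv f (finv g a)) (finv f (finv g b)).
Proof. rewrite finv_meet, finv_meet. reflexivity. Qed.


Lemma join_ub (X : frame) (S : X -> Prop) a : S a -> fle a (fjoin S).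
Proof. intros Sa. exact (proj1 (fjoin_lub S (fjoin S)) (fle_refl _) a Sa). Qed.

(* Composition g o f : X -> Z of f : X -> Y and g : Y -> Z.  Join
   preservation is proved via extensionality of the indexing predicate,
   which we avoid by an order argument. *)
Lemma join_ext (X : frame) (S T : X -> Prop) :
  (forall x, S x -> exists y, T y /\ fle x y) ->
  (forall y, T y -> exists x, S x /\ fle y x) -> fjoin S = fjoin T.
Proof.
  intros H1 H2. apply fle_antisym; apply fjoin_lub.
  - intros x Sx. destruct (H1 x Sx) as [y [Ty le]].
    eapply fle_trans; [exact le|].
    apply join_ub; exact Ty.
  - intros y Ty. destruct (H2 y Ty) as [x [Sx le]].
    eapply fle_trans; [exact le|].
    apply join_ub; exact Sx.
Qed.

Lemma lid_join (X : frame) (S : X -> Prop) :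
  fjoin S = fjoin (fun x => exists s, S s /\ x = s).
Proof.
  apply join_ext.
  - intros x Sx. exists x. split; [exists x; auto | apply fle_refl].
  - intros y [s [Ss ->]]. exists s. split; [exact Ss | apply fle_refl].
Qed.

Definition lid (X : frame) : lmap X X :=
  @LMap X X (fun a => a) eq_refl (fun _ _ => eq_refl) (@lid_join X).

Lemma lcomp_join (X Y Z : frame) (f : lmap X Y) (g : lmap Y Z) (S : Z -> Prop) :
  finv f (finv g (fjoin S)) =
  fjoin (fun x => exists s, S s /\ x = finv f (finv g s)).
Proof.
  rewrite finv_join, finv_join. apply join_ext.
  - intros x [y [[s [Ss ->]] ->]]. exists (finv f (finv g s)).
    split; [exists s; auto | apply fle_refl].
  - intros x [s [Ss ->]]. exists (finv f (finv g s)).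
    split; [|apply fle_refl]. exists (finv g s); split; auto. exists s; auto.
Qed.

Definition lcomp (X Y Z : frame) (g : lmap Y Z) (f : lmap X Y) : lmap X Z :=
  @LMap X Z (fun c => finv f (finv g c)) (lcomp_top f g) (lcomp_meet f g)
        (lcomp_join f g).

Declare Scope locale_scope.
Notation "g \o f" := (lcomp g f) (at level 50, left associativity) : locale_scope.
Delimit Scope locale_scope with L.
Open Scope locale_scope.

Definition lmeq (X Y : frame) (f g : lmap X Y) : Prop :=
  forall y, finv f y = finv g y.
Notation "f =l g" := (lmeq f g) (at level 70) : locale_scope.

Definition is_iso (X Y : frame) (f : lmap X Y) : Prop :=
  exists g : lmap Y X, (g \o f =l lid X) /\ (f \o g =l lid Y).

Definition is_open (X Y : frame) (f : lmap X Y) : Prop :=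
  exists ex : X -> Y,
    (forall x y, fle (ex x) y <-> fle x (finv f y)) /\
    (forall x y, ex (fmeet x (finv f y)) = fmeet (ex x) y).

Definition is_surj (X Y : frame) (f : lmap X Y) : Prop :=
  forall a b, finv f a = finv f b -> a = b.

Definition is_open_surj (X Y : frame) (f : lmap X Y) : Prop :=
  is_open f /\ is_surj f.

Definition is_pullback (A B C P : frame) (f : lmap A C) (g : lmap B C)
    (p1 : lmap P A) (p2 : lmap P B) : Prop :=
  (f \o p1 =l g \o p2) /\
  (forall (W : frame) (a : lmap W A) (b : lmap W B),
      f \o a =l g \o b -> exists h : lmap W P, p1 \o h =l a /\ p2 \o h =l b) /\
  (forall (W : frame) (h h' : lmap W P),
      p1 \o h =l p1 \o h' -> p2 \o h =l p2 \o h' -> h =l h').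

(* Composable pairs (g,h) with d g = r h; their product is m(g,h) = g.h with
   d (g.h) = d h and r (g.h) = r g.  Axioms are stated with generalized
   elements W -> _ (pairings characterized by their projections). *)
Record groupoid := Groupoid {
  G0 : frame; G1 : frame;
  gd : lmap G1 G0; gr : lmap G1 G0;
  gu : lmap G0 G1; gi : lmap G1 G1;
  G2 : frame; gp1 : lmap G2 G1; gp2 : lmap G2 G1;
  G2_pb : is_pullback gd gr gp1 gp2;
  gm : lmap G2 G1;
  gd_u : gd \o gu =l lid G0;
  gr_u : gr \o gu =l lid G0;
  gd_m : gd \o gm =l gd \o gp2;
  gr_m : gr \o gm =l gr \o gp1;
  gd_i : gd \o gi =l gr;
  gr_i : gr \o gi =l gd;
  gunit_l : forall W (g : lmap W G1) (q : lmap W G2),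
      gp1 \o q =l gu \o gr \o g -> gp2 \o q =l g -> gm \o q =l g;
  gunit_r : forall W (g : lmap W G1) (q : lmap W G2),
      gp1 \o q =l g -> gp2 \o q =l gu \o gd \o g -> gm \o q =l g;
  ginv_l : forall W (g : lmap W G1) (q : lmap W G2),
      gp1 \o q =l gi \o g -> gp2 \o q =l g -> gm \o q =l gu \o gd \o g;
  ginv_r : forall W (g : lmap W G1) (q : lmap W G2),
      gp1 \o q =l g -> gp2 \o q =l gi \o g -> gm \o q =l gu \o gr \o g;
  gassoc : forall W (a b c : lmap W G1) (s q s' t : lmap W G2),
      gp1 \o s =l a -> gp2 \o s =l b ->
      gp1 \o q =l gm \o s -> gp2 \o q =l c ->
      gp1 \o s' =l b -> gp2 \o s' =l c ->
      gp1 \o t =l a -> gp2 \o t =l gm \o s' ->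
      gm \o q =l gm \o t
}.

Definition open_groupoid (G : groupoid) : Prop := is_open (gd G).

(* P = G1 x_{G0} X, pairs (g,x) with d g = p x; action a(g,x) = g.x. *)
Record glocale (G : groupoid) := GLocale {
  gX : frame;
  ganch : lmap gX (G0 G);
  gP : frame;
  gq1 : lmap gP (G1 G); gq2 : lmap gP gX;
  gP_pb : is_pullback (gd G) ganch gq1 gq2;
  gact : lmap gP gX;
  ganch_act : ganch \o gact =l gr G \o gq1;
  gact_unit : forall W (x : lmap W gX) (s : lmap W gP),
      gq1 \o s =l gu G \o ganch \o x -> gq2 \o s =l x -> gact \o s =l x;
  gact_assoc : forall W (g h : lmap W (G1 G)) (x : lmap W gX)
      (s : lmap W (G2 G)) (t s' t' : lmap W gP),
      gp1 G \o s =l g -> gp2 G \o s =l h ->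
      gq1 \o t =l gm G \o s -> gq2 \o t =l x ->
      gq1 \o s' =l h -> gq2 \o s' =l x ->
      gq1 \o t' =l g -> gq2 \o t' =l gact \o s' ->
      gact \o t =l gact \o t'
}.

Definition equivariant (G : groupoid) (X Y : glocale G)
    (f : lmap (gX X) (gX Y)) : Prop :=
  (ganch Y \o f =l ganch X) /\
  (forall W (s : lmap W (gP X)) (s' : lmap W (gP Y)),
      gq1 Y \o s' =l gq1 X \o s -> gq2 Y \o s' =l f \o gq2 X \o s ->
      f \o gact X \o s =l gact Y \o s').

Definition principal (G : groupoid) (X : glocale G) (M : frame)
    (pi : lmap (gX X) M) : Prop :=
  (pi \o gact X =l pi \o gq2 X) /\
  (forall (K : frame) (k1 k2 : lmap K (gX X)),
      is_pullback pi pi k1 k2 ->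
      exists h : lmap (gP X) K,
        k1 \o h =l gact X /\ k2 \o h =l gq2 X /\ is_iso h) /\
  is_open_surj pi.

(* Main.v *)
Require Import Defs.
From Stdlib Require Import FunctionalExtensionality PropExtensionality ProofIrrelevance.
Set Implicit Arguments.
Unset Strict Implicit.

Ltac ln := unfold lmeq in *; cbn [finv lcomp lid] in *.

Section FB.
Context {F : frame}.
Implicit Types a b c : carrier F.

Lemma meet_l a b : fle (fmeet a b) a.
Proof. exact (proj1 (proj1 (fmeet_glb a b (fmeet a b)) (fle_refl _))). Qed.
Lemma meet_r a b : fle (fmeet a b) b.
Proof. exact (proj2 (proj1 (fmeet_glb a b (fmeet a b)) (fle_refl _))). Qed.
Lemma meet_intro a b c : fle c a -> fle c b -> fle c (fmeet a b).
Proof. intros; apply fmeet_glb; auto. Qed.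
Lemma join_le (S : carrier F -> Prop) c : (forall a, S a -> fle a c) -> fle (fjoin S) c.
Proof. intros; apply fjoin_lub; auto. Qed.
Lemma top_max a : fle a (ftop F).
Proof. apply join_ub; exact I. Qed.
End FB.

Ltac mt := first [ apply fle_refl
 | apply meet_intro; mt
 | eapply fle_trans; [apply meet_l | mt]
 | eapply fle_trans; [apply meet_r | mt] ].

Section FB2.
Context {F : frame}.
Implicit Types a b c : carrier F.
Lemma meet_comm a b : fmeet a b = fmeet b a.
Proof. apply fle_antisym; mt. Qed.
Lemma meet_eq_l a b : fle a b -> fmeet a b = a.
Proof. intros; apply fle_antisym; [mt|]. apply meet_intro; [apply fle_refl|auto]. Qed.
Lemma meet_eq_r a b : fle b a -> fmeet a b = b.
Proof. intros; apply fle_antisym; [mt|]. apply meet_intro; [auto|apply fle_refl]. Qed.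
Lemma meet_mono a b a' b' : fle a a' -> fle b b' -> fle (fmeet a b) (fmeet a' b').
Proof. intros. apply meet_intro; eapply fle_trans; eauto; mt. Qed.
Lemma meet_top a : fmeet (ftop F) a = a.
Proof. apply meet_eq_r, top_max. Qed.
Lemma meet_top_r a : fmeet a (ftop F) = a.
Proof. apply meet_eq_l, top_max. Qed.
Lemma distr_r (S : carrier F -> Prop) a :
  fmeet (fjoin S) a = fjoin (fun c => exists s, S s /\ c = fmeet s a).
Proof.
  rewrite meet_comm, fdistrib. apply join_ext.
  - intros x [s [Ss ->]]. exists (fmeet s a). split; [eauto|]. rewrite meet_comm; apply fle_refl.
  - intros x [s [Ss ->]]. exists (fmeet a s). split; [eauto|]. rewrite meet_comm; apply fle_refl.
Qed.
Lemma le_trans3 a b c : fle a b -> fle b c -> fle a c.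
Proof. apply fle_trans. Qed.
End FB2.

Lemma finv_mono X Y (f : lmap X Y) a b : fle a b -> fle (finv f a) (finv f b).
Proof. intros H. rewrite <- (meet_eq_l H), finv_meet. apply meet_r. Qed.

Lemma finv_topE X Y (f : lmap X Y) : finv f (ftop Y) = ftop X.
Proof. apply finv_top. Qed.

Definition oadj X Y (f : lmap X Y) (ex : X -> Y) :=
  (forall x y, fle (ex x) y <-> fle x (finv f y)) /\
  (forall x y, ex (fmeet x (finv f y)) = fmeet (ex x) y).

Section OA.
Variables (X Y : frame) (f : lmap X Y) (ex : X -> Y) (H : oadj f ex).
Lemma ex_unit x : fle x (finv f (ex x)).
Proof. apply (proj1 H), fle_refl. Qed.
Lemma ex_counit y : fle (ex (finv f y)) y.
Proof. apply (proj1 H), fle_refl. Qed.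
Lemma ex_mono x x' : fle x x' -> fle (ex x) (ex x').
Proof. intros; apply (proj1 H). eapply fle_trans; [eauto|apply ex_unit]. Qed.
Lemma ex_frob x y : ex (fmeet x (finv f y)) = fmeet (ex x) y.
Proof. apply (proj2 H). Qed.
Lemma ex_frob' x y : ex (fmeet (finv f y) x) = fmeet y (ex x).
Proof. rewrite meet_comm, ex_frob, meet_comm; reflexivity. Qed.
Lemma ex_join (S : X -> Prop) : fle (ex (fjoin S)) (fjoin (fun c => exists s, S s /\ c = ex s)).
Proof.
  apply (proj1 H). apply join_le. intros a Sa.
  eapply fle_trans; [apply ex_unit|]. apply finv_mono, join_ub. eauto.
Qed.
End OA.

Lemma surj_le X Y (f : lmap X Y) (Hs : is_surj f) a b :
  fle (finv f a) (finv f b) -> fle a b.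
Proof.
  intros H. assert (E : fmeet a b = a).
  { apply Hs. rewrite finv_meet. apply meet_eq_l; auto. }
  rewrite <- E; apply meet_r.
Qed.

Lemma oadj_comp X Y Z (f : lmap X Y) (g : lmap Y Z) exf exg :
  oadj f exf -> oadj g exg -> oadj (g \o f) (fun x => exg (exf x)).
Proof.
  intros Hf Hg; split.
  - intros x z; simpl. rewrite (proj1 Hg), (proj1 Hf). tauto.
  - intros x z; simpl. rewrite (ex_frob Hf), (ex_frob Hg). reflexivity.
Qed.

Section PB.
Variables (A B C : frame) (f : lmap A C) (g : lmap B C).

Record sat (D : A -> B -> Prop) : Prop := {
  sat_down : forall x y x' y', fle x' x -> fle y' y -> D x y -> D x' y';
  sat_jl : forall (S : A -> Prop) y, (forall x, S x -> D x y) -> D (fjoin S) y;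
  sat_jr : forall x (S : B -> Prop), (forall y, S y -> D x y) -> D x (fjoin S);
  sat_mv : forall x y c, D (fmeet x (finv f c)) y <-> D x (fmeet (finv g c) y) }.

Definition PbT := { D : A -> B -> Prop | sat D }.

Lemma pb_ext (D E : PbT) : (forall x y, proj1_sig D x y <-> proj1_sig E x y) -> D = E.
Proof.
  destruct D as [D HD], E as [E HE]; simpl; intros H.
  assert (D = E) as ->.
  { extensionality x; extensionality y; apply propositional_extensionality; auto. }
  f_equal; apply proof_irrelevance.
Qed.

Definition cl (U : A -> B -> Prop) : A -> B -> Prop :=
  fun x y => forall D, sat D -> (forall a b, U a b -> D a b) -> D x y.

Lemma cl_sat U : sat (cl U).
Proof.
  split.
  - intros x y x' y' H1 H2 H D HD HU. eapply (sat_down HD); [exact H1|exact H2|apply H; auto].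
  - intros S y H D HD HU. apply sat_jl; auto. intros x Sx; apply H; auto.
  - intros x S H D HD HU. apply sat_jr; auto. intros y Sy; apply H; auto.
  - intros x y c; split; intros H D HD HU; apply (sat_mv HD); apply H; auto.
Qed.
Lemma cl_incl (U : A -> B -> Prop) x y : U x y -> cl U x y.
Proof. intros H D HD HU; auto. Qed.
Lemma cl_min (U D : A -> B -> Prop) : sat D -> (forall a b, U a b -> D a b) ->
  forall x y, cl U x y -> D x y.
Proof. intros HD HU x y H; apply H; auto. Qed.
Lemma cl_mono (U V : A -> B -> Prop) : (forall a b, U a b -> V a b) ->
  forall x y, cl U x y -> cl V x y.
Proof. intros HUV x y H D HD HV. apply H; auto. Qed.

Lemma sat_and (D E : A -> B -> Prop) : sat D -> sat E -> sat (fun x y => D x y /\ E x y).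
Proof.
  intros HD HE; split.
  - intros x y x' y' H1 H2 [H3 H4]; split; eapply sat_down; eauto.
  - intros S y H; split; apply sat_jl; auto; intros x Sx; apply H; auto.
  - intros x S H; split; apply sat_jr; auto; intros y Sy; apply H; auto.
  - intros x y c; rewrite (sat_mv HD), (sat_mv HE); tauto.
Qed.
Lemma sat_full : sat (fun _ _ => True).
Proof. split; auto; tauto. Qed.

Lemma cl_meet (A0 U : A -> B -> Prop) : sat A0 ->
  (forall x y x' y', fle x' x -> fle y' y -> U x y -> U x' y') ->
  forall x y, A0 x y -> cl U x y -> cl (fun x y => A0 x y /\ U x y) x y.
Proof.
  intros HA HU x y Ax Cx.
  set (B0 := cl (fun x y => A0 x y /\ U x y)).
  assert (HB : sat B0) by apply cl_sat.
  set (E := fun x y => forall x' y', fle x' x -> fle y' y -> A0 x' y' -> B0 x' y').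
  assert (HE : sat E).
  { split.
    - intros a b a' b' H1 H2 H a'' b'' H3 H4 H5. apply H; auto; eapply fle_trans; eauto.
    - intros S b H x' y' H1 H2 H3.
      assert (Ex : x' = fjoin (fun c => exists s, S s /\ c = fmeet x' s)).
      { rewrite <- fdistrib. symmetry; apply meet_eq_l; auto. }
      rewrite Ex. apply (sat_jl HB). intros c [s [Ss ->]].
      apply (H s Ss); [apply meet_r | exact H2 |].
      eapply (sat_down HA); [apply meet_l | apply fle_refl | exact H3].
    - intros a S H x' y' H1 H2 H3.
      assert (Ey : y' = fjoin (fun c => exists s, S s /\ c = fmeet y' s)).
      { rewrite <- fdistrib. symmetry; apply meet_eq_l; auto. }
      rewrite Ey. apply (sat_jr HB). intros c [s [Ss ->]].
      apply (H s Ss); [exact H1 | apply meet_r |].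
      eapply (sat_down HA); [apply fle_refl | apply meet_l | exact H3].
    - intros a b c; split; intros H x' y' H1 H2 H3.
      + assert (Ey : fmeet (finv g c) y' = y').
        { apply meet_eq_r. eapply fle_trans; [exact H2|]. apply meet_l. }
        rewrite <- Ey. apply (sat_mv HB). apply H.
        * apply meet_mono; auto; apply fle_refl.
        * eapply fle_trans; [exact H2|]; apply meet_r.
        * eapply (sat_down HA); [apply meet_l|apply fle_refl|exact H3].
      + assert (Ex : fmeet x' (finv f c) = x').
        { apply meet_eq_l. eapply fle_trans; [exact H1|]. apply meet_r. }
        rewrite <- Ex. apply (sat_mv HB). apply H.
        * eapply fle_trans; [exact H1|]; apply meet_l.
        * apply meet_mono; auto; apply fle_refl.
        * eapply (sat_down HA); [apply fle_refl|apply meet_r|exact H3]. }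
  assert (UE : forall a b, U a b -> E a b).
  { intros a b Uab x' y' H1 H2 H3. apply cl_incl. split; auto. eapply HU; eauto. }
  apply (cl_min HE UE Cx); auto; apply fle_refl.
Qed.

Definition pb_le (D E : PbT) := forall x y, proj1_sig D x y -> proj1_sig E x y.
Definition pb_meet (D E : PbT) : PbT :=
  exist _ (fun x y => proj1_sig D x y /\ proj1_sig E x y) (sat_and (proj2_sig D) (proj2_sig E)).
Definition pb_join (S : PbT -> Prop) : PbT :=
  exist _ (cl (fun x y => exists D, S D /\ proj1_sig D x y)) (cl_sat _).

Lemma pb_refl a : pb_le a a.
Proof. intros x y; auto. Qed.
Lemma pb_trans a b c : pb_le a b -> pb_le b c -> pb_le a c.
Proof. intros H1 H2 x y H; auto. Qed.
Lemma pb_antisym a b : pb_le a b -> pb_le b a -> a = b.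
Proof. intros H1 H2; apply pb_ext; split; auto. Qed.
Lemma pb_glb a b c : pb_le c (pb_meet a b) <-> pb_le c a /\ pb_le c b.
Proof. unfold pb_le; simpl; split; [intros H; split; intros; apply H; auto|].
  intros [H1 H2] x y H; auto. Qed.
Lemma pb_lub (S : PbT -> Prop) c : pb_le (pb_join S) c <-> (forall a, S a -> pb_le a c).
Proof.
  unfold pb_le; simpl; split.
  - intros H a Sa x y Hxy. apply H, cl_incl. eauto.
  - intros H x y Hc. apply (cl_min (proj2_sig c)) in Hc; auto.
    intros a b [D [SD HD]]. eapply H; eauto.
Qed.
Lemma pb_distrib a (S : PbT -> Prop) :
  pb_meet a (pb_join S) = pb_join (fun c => exists s, S s /\ c = pb_meet a s).
Proof.
  apply pb_ext; intros x y; simpl; split.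
  - intros [Ha Hc]. 
    eapply cl_mono; [|apply (cl_meet (proj2_sig a) (U := fun x y => exists D, S D /\ proj1_sig D x y)); eauto].
    + intros p q [Hp [D [SD HD]]]. exists (pb_meet a D). split; [eauto|]. simpl; auto.
    + intros p q p' q' H1 H2 [D [SD HD]]. exists D; split; auto.
      eapply (sat_down (proj2_sig D)); eauto.
  - intros H. apply (cl_min (sat_and (proj2_sig a) (cl_sat (fun x y => exists D, S D /\ proj1_sig D x y)))) in H; auto.
    intros p q [D [[s [Ss ->]] [H1 H2]]]. split; auto. apply cl_incl; eauto.
Qed.

Definition Pb : frame :=
  {| carrier := PbT; fle := pb_le; fmeet := pb_meet; fjoin := pb_join;
     fle_refl := pb_refl; fle_trans := pb_trans; fle_antisym := pb_antisym;
     fmeet_glb := pb_glb; fjoin_lub := pb_lub; fdistrib := pb_distrib |}.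

End PB.

Section PBM.
Variables (A B C : frame) (f : lmap A C) (g : lmap B C).
Variables (exf : A -> C) (exg : B -> C) (Hf : oadj f exf) (Hg : oadj g exg).

Notation PB := (Pb f g).

Lemma top_all x y : proj1_sig (ftop PB) x y.
Proof.
  apply cl_incl. exists (exist _ (fun _ _ => True) (sat_full f g)). split; simpl; auto.
Qed.

Lemma shift1 (D : A -> B -> Prop) x y : sat f g D -> D (fmeet x (finv f (exg y))) y -> D x y.
Proof.
  intros HD H. apply (sat_mv HD) in H. rewrite (meet_eq_r (ex_unit Hg y)) in H. exact H.
Qed.
Lemma shift2 (D : A -> B -> Prop) x y : sat f g D -> D x (fmeet (finv g (exf x)) y) -> D x y.
Proof.
  intros HD H. apply (sat_mv HD) in H. rewrite (meet_eq_l (ex_unit Hf x)) in H. exact H.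
Qed.

Lemma sat_p1 (a0 : A) : sat f g (fun x y => fle (fmeet x (finv f (exg y))) a0).
Proof.
  split.
  - intros x y x' y' H1 H2 H. eapply fle_trans; [|exact H].
    apply meet_mono; auto. apply finv_mono, (ex_mono Hg); auto.
  - intros S y H. rewrite distr_r. apply join_le. intros c [s [Ss ->]]; auto.
  - intros x S H. eapply fle_trans.
    { apply meet_mono; [apply fle_refl|]. apply finv_mono, (ex_join Hg). }
    rewrite finv_join, fdistrib. apply join_le. intros c [d [[e [[s [Ss ->]] ->]] ->]]. auto.
  - intros x y c. rewrite (ex_frob' Hg), finv_meet.
    assert (E : fmeet (fmeet x (finv f c)) (finv f (exg y)) =
                fmeet x (fmeet (finv f c) (finv f (exg y)))) by (apply fle_antisym; mt).
    rewrite E; tauto.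
Qed.

Lemma sat_p2 (b0 : B) : sat f g (fun x y => fle (fmeet (finv g (exf x)) y) b0).
Proof.
  split.
  - intros x y x' y' H1 H2 H. eapply fle_trans; [|exact H].
    apply meet_mono; auto. apply finv_mono, (ex_mono Hf); auto.
  - intros S y H. eapply fle_trans.
    { apply meet_mono; [|apply fle_refl]. apply finv_mono, (ex_join Hf). }
    rewrite finv_join, distr_r. apply join_le. intros c [d [[e [[s [Ss ->]] ->]] ->]]. auto.
  - intros x S H. rewrite fdistrib. apply join_le. intros c [s [Ss ->]]; auto.
  - intros x y c. rewrite (ex_frob Hf), finv_meet.
    assert (E : fmeet (fmeet (finv g (exf x)) (finv g c)) y =
                fmeet (finv g (exf x)) (fmeet (finv g c) y)) by (apply fle_antisym; mt).
    rewrite E; tauto.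
Qed.

Definition p1f (a0 : A) : PB := exist _ _ (sat_p1 a0).
Definition p2f (b0 : B) : PB := exist _ _ (sat_p2 b0).

Lemma p1_top : p1f (ftop A) = ftop PB.
Proof. apply pb_ext; intros x y; simpl; split; intros; [apply top_all|apply top_max]. Qed.
Lemma p2_top : p2f (ftop B) = ftop PB.
Proof. apply pb_ext; intros x y; simpl; split; intros; [apply top_all|apply top_max]. Qed.
Lemma p1_meet a b : p1f (fmeet a b) = fmeet (p1f a) (p1f b).
Proof. apply pb_ext; intros x y; simpl. apply fmeet_glb. Qed.
Lemma p2_meet a b : p2f (fmeet a b) = fmeet (p2f a) (p2f b).
Proof. apply pb_ext; intros x y; simpl. apply fmeet_glb. Qed.

Lemma p1_join (S : A -> Prop) :
  p1f (fjoin S) = fjoin (fun D => exists s, S s /\ D = p1f s).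
Proof.
  apply pb_ext; intros x y; simpl; split.
  - intros H. apply (shift1 (cl_sat _ _ _)).
    set (k := fmeet x (finv f (exg y))) in *.
    assert (Ek : k = fjoin (fun c => exists s, S s /\ c = fmeet k s)).
    { rewrite <- fdistrib. symmetry; apply meet_eq_l; auto. }
    rewrite Ek. apply (sat_jl (cl_sat _ _ _)). intros c [s [Ss ->]].
    apply cl_incl. exists (p1f s). split; [eauto|]. simpl. mt.
  - intros H. apply (cl_min (sat_p1 (fjoin S))) in H; auto.
    intros a b [D [[s [Ss ->]] Hd]]. simpl in Hd. eapply fle_trans; [exact Hd|].
    apply join_ub; auto.
Qed.

Lemma p2_join (S : B -> Prop) :
  p2f (fjoin S) = fjoin (fun D => exists s, S s /\ D = p2f s).
Proof.
  apply pb_ext; intros x y; simpl; split.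
  - intros H. apply (shift2 (cl_sat _ _ _)).
    set (k := fmeet (finv g (exf x)) y) in *.
    assert (Ek : k = fjoin (fun c => exists s, S s /\ c = fmeet k s)).
    { rewrite <- fdistrib. symmetry; apply meet_eq_l; auto. }
    rewrite Ek. apply (sat_jr (cl_sat _ _ _)). intros c [s [Ss ->]].
    apply cl_incl. exists (p2f s). split; [eauto|]. simpl. mt.
  - intros H. apply (cl_min (sat_p2 (fjoin S))) in H; auto.
    intros a b [D [[s [Ss ->]] Hd]]. simpl in Hd. eapply fle_trans; [exact Hd|].
    apply join_ub; auto.
Qed.

Definition pp1 : lmap PB A := LMap p1_top p1_meet p1_join.
Definition pp2 : lmap PB B := LMap p2_top p2_meet p2_join.

Lemma pb_square : f \o pp1 =l g \o pp2.
Proof.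
  intros c. change (p1f (finv f c) = p2f (finv g c)).
  apply pb_ext; intros x y; simpl.
  rewrite <- (proj1 Hf), <- (proj1 Hg), (ex_frob Hf), (ex_frob' Hg). tauto.
Qed.

Section Pair.
Variables (W : frame) (a : lmap W A) (b : lmap W B) (Hab : f \o a =l g \o b).

Definition pairf (D : PB) : W :=
  fjoin (fun w => exists x y, proj1_sig D x y /\ w = fmeet (finv a x) (finv b y)).

Lemma Hab' c : finv a (finv f c) = finv b (finv g c).
Proof. exact (Hab c). Qed.

Lemma sat_N c : sat f g (fun x y => fle (fmeet (finv a x) (finv b y)) c).
Proof.
  split.
  - intros x y x' y' H1 H2 H. eapply fle_trans; [|exact H].
    apply meet_mono; apply finv_mono; auto.
  - intros S y H. rewrite finv_join, distr_r. apply join_le.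
    intros w [t [[s [Ss ->]] ->]]. auto.
  - intros x S H. rewrite finv_join, fdistrib. apply join_le.
    intros w [t [[s [Ss ->]] ->]]. auto.
  - intros x y c'. rewrite !finv_meet, Hab'.
    assert (E : fmeet (fmeet (finv a x) (finv b (finv g c'))) (finv b y) =
                fmeet (finv a x) (fmeet (finv b (finv g c')) (finv b y))) by (apply fle_antisym; mt).
    rewrite E; tauto.
Qed.

Lemma pairf_mono (D E : PB) : fle D E -> fle (pairf D) (pairf E).
Proof.
  intros H. apply join_le. intros w [x [y [Hd ->]]]. apply join_ub. exists x, y; split; auto.
Qed.

Lemma pair_top : pairf (ftop PB) = ftop W.
Proof.
  apply fle_antisym; [apply top_max|].
  eapply fle_trans; [|apply join_ub; exists (ftop A), (ftop B); split; [apply top_all|reflexivity]].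
  rewrite !finv_top, meet_top. apply fle_refl.
Qed.

Lemma pair_meet D E : pairf (fmeet D E) = fmeet (pairf D) (pairf E).
Proof.
  apply fle_antisym.
  - apply join_le. intros w [x [y [[Dxy Exy] ->]]].
    apply meet_intro; apply join_ub; exists x, y; split; auto.
  - unfold pairf at 1 2. rewrite fdistrib. apply join_le. intros w [t [[x' [y' [Ex' ->]]] ->]].
    rewrite distr_r. apply join_le. intros w [t [[x [y [Dx ->]]] ->]].
    eapply fle_trans; [|apply join_ub; exists (fmeet x x'), (fmeet y y'); split; [split|reflexivity]].
    + rewrite !finv_meet. mt.
    + eapply (sat_down (proj2_sig D)); [apply meet_l|apply meet_l|exact Dx].
    + eapply (sat_down (proj2_sig E)); [apply meet_r|apply meet_r|exact Ex'].
Qed.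

Lemma pair_join (S : PB -> Prop) :
  pairf (fjoin S) = fjoin (fun w => exists D, S D /\ w = pairf D).
Proof.
  apply fle_antisym.
  - apply join_le. intros w [x [y [Hc ->]]].
    apply (cl_min (sat_N (fjoin (fun w => exists D, S D /\ w = pairf D)))) in Hc; [exact Hc|].
    intros x0 y0 [D [SD HD]].
    eapply fle_trans; [|apply join_ub; exists D; split; [exact SD|reflexivity]].
    apply join_ub. exists x0, y0; split; auto.
  - apply join_le. intros w [D [SD ->]]. apply pairf_mono.
    intros x y H. apply cl_incl. eauto.
Qed.

Definition Ppair : lmap W PB := LMap pair_top pair_meet pair_join.

Lemma Ppair_1 : pp1 \o Ppair =l a.
Proof.
  intros x0. change (pairf (p1f x0) = finv a x0). apply fle_antisym.
  - apply join_le. intros w [x [y [H ->]]]. simpl in H.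
    eapply fle_trans; [|apply finv_mono; exact H]. rewrite finv_meet.
    apply meet_intro; [mt|]. eapply fle_trans; [apply meet_r|].
    rewrite Hab'. apply finv_mono, (ex_unit Hg).
  - eapply fle_trans; [|apply join_ub; exists x0, (ftop B); split; [simpl; apply meet_l|reflexivity]].
    rewrite finv_top, meet_top_r. apply fle_refl.
Qed.

Lemma Ppair_2 : pp2 \o Ppair =l b.
Proof.
  intros y0. change (pairf (p2f y0) = finv b y0). apply fle_antisym.
  - apply join_le. intros w [x [y [H ->]]]. simpl in H.
    eapply fle_trans; [|apply finv_mono; exact H]. rewrite finv_meet.
    apply meet_intro; [|mt]. eapply fle_trans; [apply meet_l|].
    rewrite <- Hab'. apply finv_mono, (ex_unit Hf).
  - eapply fle_trans; [|apply join_ub; exists (ftop A), y0; split; [simpl; apply meet_r|reflexivity]].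
    rewrite finv_top, meet_top. apply fle_refl.
Qed.
End Pair.

Lemma box_sub (D : PB) x y : proj1_sig D x y -> fle (fmeet (p1f x) (p2f y)) D.
Proof.
  intros Hd x' y' [H1 H2]. simpl in H1, H2.
  apply (shift2 (proj2_sig D)).
  assert (Hd' : proj1_sig D (fmeet x' (finv f (exg y'))) (fmeet (finv g (exf x')) y')).
  { eapply (sat_down (proj2_sig D)); [exact H1|exact H2|exact Hd]. }
  apply (proj1 (sat_mv (proj2_sig D) _ _ _)) in Hd'.
  assert (E : fmeet (finv g (exg y')) (fmeet (finv g (exf x')) y') = fmeet (finv g (exf x')) y').
  { apply fle_antisym; [mt|]. apply meet_intro; [|apply fle_refl].
    eapply fle_trans; [apply meet_r|]. apply (ex_unit Hg). }
  rewrite E in Hd'. exact Hd'.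
Qed.

Lemma decomp (D : PB) :
  D = fjoin (fun E => exists x y, proj1_sig D x y /\ E = fmeet (p1f x) (p2f y)).
Proof.
  apply fle_antisym.
  - intros x y H. apply cl_incl. exists (fmeet (p1f x) (p2f y)). split; [eauto|].
    simpl; split; mt.
  - apply join_le. intros E [x [y [H ->]]]. apply box_sub; auto.
Qed.

Lemma pb_uniq (W : frame) (h h' : lmap W PB) :
  pp1 \o h =l pp1 \o h' -> pp2 \o h =l pp2 \o h' -> h =l h'.
Proof.
  assert (L : forall h h' : lmap W PB, pp1 \o h =l pp1 \o h' -> pp2 \o h =l pp2 \o h' ->
            forall D, fle (finv h D) (finv h' D)).
  { intros k k' H1 H2 D. rewrite (decomp D) at 1. rewrite finv_join. apply join_le.
    intros w [E [[x [y [Dxy ->]]] ->]]. rewrite finv_meet.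
    change (fle (fmeet (finv k (finv pp1 x)) (finv k (finv pp2 y))) (finv k' D)).
    assert (E1 := H1 x); assert (E2 := H2 y).
    change (finv k (finv pp1 x) = finv k' (finv pp1 x)) in E1.
    change (finv k (finv pp2 y) = finv k' (finv pp2 y)) in E2.
    rewrite E1, E2, <- finv_meet. apply finv_mono, box_sub; auto. }
  intros H1 H2 D. apply fle_antisym; apply L; auto; intros z; symmetry; auto.
Qed.

Lemma pb_is_pullback : is_pullback f g pp1 pp2.
Proof.
  split; [apply pb_square|split].
  - intros W a b H. exists (Ppair H). split; [apply Ppair_1|apply Ppair_2].
  - apply pb_uniq.
Qed.

Definition pex (D : PB) : A :=
  fjoin (fun w => exists x y, proj1_sig D x y /\ w = fmeet x (finv f (exg y))).

Lemma oadj_pp1 : oadj pp1 pex.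
Proof.
  split.
  - intros D a0; split.
    + intros H x y Hd. simpl. eapply fle_trans; [|exact H]. apply join_ub; eauto.
    + intros H. apply join_le. intros w [x [y [Hd ->]]]. apply (H x y Hd).
  - intros D a0. apply fle_antisym.
    + apply join_le. intros w [x [y [[Hd Hp] ->]]]. apply meet_intro; [|exact Hp].
      apply join_ub; eauto.
    + unfold pex at 1. rewrite distr_r. apply join_le. intros w [t [[x [y [Hd ->]]] ->]].
      eapply fle_trans; [|apply join_ub; exists (fmeet x a0), y; split; [split|reflexivity]].
      * mt.
      * eapply (sat_down (proj2_sig D)); [apply meet_l|apply fle_refl|exact Hd].
      * simpl. mt.
Qed.

End PBM.


Lemma descent X M (pi : lmap X M) ex (Hex : oadj pi ex) (u : X) :
  finv (pp1 pi Hex) u = finv (pp2 pi Hex) u -> finv pi (ex u) = u.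
Proof.
  intros H. apply fle_antisym; [|apply (ex_unit Hex)].
  assert (H2 : proj1_sig (finv (pp2 pi Hex) u) (finv pi (ex u)) u).
  { simpl. apply meet_r. }
  rewrite <- H in H2. simpl in H2.
  eapply fle_trans; [|exact H2]. mt.
Qed.

Lemma iso_inj X Y (h : lmap X Y) (e : lmap Y X) : h \o e =l lid Y ->
  forall a b, finv h a = finv h b -> a = b.
Proof.
  intros He a b H. assert (Ha := He a); assert (Hb := He b). ln.
  rewrite <- Ha, <- Hb, H; reflexivity.
Qed.

Lemma surj_eq X Y (f : lmap X Y) (Hs : is_surj f) a b : finv f a = finv f b -> a = b.
Proof. apply Hs. Qed.

Section Exist.
Variables (G : groupoid) (X1 X2 : glocale G) (M1 M2 : frame)
  (pi1 : lmap (gX X1) M1) (pi2 : lmap (gX X2) M2)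
  (P1 : principal pi1) (P2 : principal pi2)
  (f : lmap (gX X1) (gX X2)) (Hf : equivariant f).

Lemma act_inv_u b : finv (gact X1) (finv f (finv pi2 b)) = finv (gq2 X1) (finv f (finv pi2 b)).
Proof.
  destruct P2 as [inv2 _].
  destruct (gP_pb X2) as [sq2 [ex2 un2]]. destruct (gP_pb X1) as [sq1 _].
  destruct Hf as [Hanch Hact].
  assert (Hs : gd G \o gq1 X1 =l ganch X2 \o (f \o gq2 X1)).
  { ln. intros y. rewrite Hanch. apply sq1. }
  destruct (ex2 _ _ _ Hs) as [s' [Hs1 Hs2]].
  assert (E := Hact (gP X1) (lid _) s').
  assert (E' : f \o gact X1 \o lid (gP X1) =l gact X2 \o s').
  { apply E; ln; intros; auto. }
  ln. rewrite E', inv2, Hs2. reflexivity.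
Qed.

Lemma exist_desc : exists fG : lmap M1 M2, fG \o pi1 =l pi2 \o f.
Proof.
  destruct P1 as [inv1 [iso1 [[ex1 Hex1] surj1]]].
  destruct (iso1 _ _ _ (pb_is_pullback Hex1 Hex1)) as [h [Hh1 [Hh2 [e [He1 He2]]]]].
  assert (D : forall b, finv pi1 (ex1 (finv f (finv pi2 b))) = finv f (finv pi2 b)).
  { intros b. apply (descent (Hex:=Hex1)). apply (iso_inj He2). ln.
    rewrite Hh1, Hh2. apply act_inv_u. }
  unshelve eexists (@LMap M1 M2 (fun b => ex1 (finv f (finv pi2 b))) _ _ _).
  - apply surj1. rewrite D, !finv_top. reflexivity.
  - intros a b. apply surj1. rewrite D, (finv_meet pi1), D, D, (finv_meet pi2), (finv_meet f).
    reflexivity.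
  - intros S. apply surj1. rewrite D, lcomp_join, (finv_join pi1). apply join_ext.
    + intros x [s [Ss ->]]. exists (finv pi1 (ex1 (finv f (finv pi2 s)))). split; [|rewrite D; apply fle_refl].
      exists (ex1 (finv f (finv pi2 s))). split; eauto.
    + intros y [t [[s [Ss ->]] ->]]. exists (finv f (finv pi2 s)). split; [eauto|].
      rewrite D; apply fle_refl.
  - ln. intros y. apply D.
Qed.
End Exist.


Section Main.
Variables (G : groupoid) (X1 X2 : glocale G) (M1 M2 : frame)
  (pi1 : lmap (gX X1) M1) (pi2 : lmap (gX X2) M2)
  (f : lmap (gX X1) (gX X2)) (Hf : equivariant f)
  (fG : lmap M1 M2) (HfG : fG \o pi1 =l pi2 \o f).
Variables (exa : gX X1 -> M1) (Hexa : oadj pi1 exa) (surj1 : is_surj pi1)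
  (exb : gX X2 -> M2) (Hexb : oadj pi2 exb).

Notation K1 := (Pb pi1 pi1).
Notation k1 := (pp1 pi1 Hexa).
Notation k2 := (pp2 pi1 Hexa).
Notation K2 := (Pb pi2 pi2).
Notation l1 := (pp1 pi2 Hexb).
Notation l2 := (pp2 pi2 Hexb).

Variables (h1 : lmap (gP X1) K1) (e1 : lmap K1 (gP X1))
  (Hh11 : k1 \o h1 =l gact X1) (Hh12 : k2 \o h1 =l gq2 X1)
  (He11 : e1 \o h1 =l lid _) (He12 : h1 \o e1 =l lid _).
Variables (h2 : lmap (gP X2) K2) (e2 : lmap K2 (gP X2))
  (Hh21 : l1 \o h2 =l gact X2) (Hh22 : l2 \o h2 =l gq2 X2)
  (He21 : e2 \o h2 =l lid _) (He22 : h2 \o e2 =l lid _).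

Lemma ACT1E1 : gact X1 \o e1 =l k1.
Proof. ln. intros y. rewrite <- Hh11. apply He12. Qed.
Lemma Q2E1 : gq2 X1 \o e1 =l k2.
Proof. ln. intros y. rewrite <- Hh12. apply He12. Qed.
Lemma ACT2E2 : gact X2 \o e2 =l l1.
Proof. ln. intros y. rewrite <- Hh21. apply He22. Qed.
Lemma Q2E2 : gq2 X2 \o e2 =l l2.
Proof. ln. intros y. rewrite <- Hh22. apply He22. Qed.

Variables (F : lmap (gP X1) (gP X2)) (HF1 : gq1 X2 \o F =l gq1 X1)
  (HF2 : gq2 X2 \o F =l f \o gq2 X1).

Section Opn.
Variables (exG : M1 -> M2) (HexG : oadj fG exG).

Definition exc := fun x => exG (exa x).
Definition Hexc : oadj (fG \o pi1) exc := oadj_comp Hexa HexG.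
Notation T := (Pb pi2 (fG \o pi1)).
Notation prY := (pp1 pi2 Hexc).
Notation prX := (pp2 (fG \o pi1) Hexb).

Lemma rho_cond : pi2 \o prY =l pi2 \o (f \o prX).
Proof.
  assert (S := pb_square Hexb Hexc). ln. intros y. rewrite S, HfG. reflexivity.
Qed.
Definition rho : lmap T K2 := Ppair rho_cond.

Lemma sigma_cond : gd G \o (gq1 X2 \o e2 \o rho) =l ganch X1 \o prX.
Proof.
  destruct (gP_pb X2) as [sq2 _]. destruct Hf as [Hanch _].
  assert (R2 := Ppair_2 Hexb rho_cond). assert (QE := Q2E2).
  ln. intros y. rewrite sq2, QE. unfold rho. rewrite R2, Hanch. reflexivity.
Qed.

Variables (sigma : lmap T (gP X1))
  (Hs1 : gq1 X1 \o sigma =l gq1 X2 \o e2 \o rho) (Hs2 : gq2 X1 \o sigma =l prX).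

Lemma fact_sigma : f \o gact X1 \o sigma =l prY.
Proof.
  destruct Hf as [_ Hact].
  assert (E : f \o gact X1 \o sigma =l gact X2 \o (e2 \o rho)).
  { apply Hact.
    - ln. intros y. rewrite Hs1. reflexivity.
    - assert (QE := Q2E2). assert (R2 := Ppair_2 Hexb rho_cond).
      ln. intros y. rewrite Hs2, QE. unfold rho. rewrite R2. reflexivity. }
  assert (AE := ACT2E2). assert (R1 := Ppair_1 Hexb rho_cond).
  ln. intros y. rewrite E, AE. unfold rho. rewrite R1. reflexivity.
Qed.

Lemma j_cond : pi2 \o f =l (fG \o pi1) \o lid (gX X1).
Proof. ln. intros y. symmetry. apply HfG. Qed.
Definition jm : lmap (gX X1) T := Ppair j_cond.

Lemma act_sigma_j : gact X1 \o sigma \o jm =l lid (gX X1).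
Proof.
  destruct (gP_pb X2) as [sq2 [ex2 un2]].
  destruct Hf as [Hanch _].
  assert (C0 : gd G \o (gu G \o ganch X2 \o f) =l ganch X2 \o f).
  { assert (D := @gd_u G). ln. intros y. rewrite D. reflexivity. }
  destruct (ex2 _ _ _ C0) as [s0 [Hs01 Hs02]].
  assert (Hact2s0 : gact X2 \o s0 =l f).
  { apply gact_unit; auto. }
  assert (Eh : h2 \o s0 =l rho \o jm).
  { apply (pb_uniq (Hf:=Hexb) (Hg:=Hexb)).
    - assert (R1 := Ppair_1 Hexb rho_cond). assert (J1 := Ppair_1 Hexc j_cond).
      ln. intros y. rewrite Hh21, Hact2s0. unfold rho. rewrite R1. unfold jm. rewrite J1. reflexivity.
    - assert (R2 := Ppair_2 Hexb rho_cond). assert (J2 := Ppair_2 Hexb j_cond).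
      ln. intros y. rewrite Hh22, Hs02. unfold rho. rewrite R2. unfold jm. rewrite J2. reflexivity. }
  change (gact X1 \o (sigma \o jm) =l lid (gX X1)).
  apply gact_unit.
  - ln. intros y. rewrite Hs1, <- Eh, He21, Hs01, Hanch. reflexivity.
  - assert (J2 := Ppair_2 Hexb j_cond). ln. intros y. rewrite Hs2. unfold jm. rewrite J2. reflexivity.
Qed.

Definition fl (U : gX X1) : gX X2 := pex exc (finv sigma (finv (gact X1) U)).

Lemma f_oadj : oadj f fl.
Proof.
  assert (O := oadj_pp1 pi2 Hexc).
  assert (FS := fact_sigma). assert (AJ := act_sigma_j).
  assert (J1 := Ppair_1 Hexc j_cond). ln.
  split.
  - intros U V; split.
    + intros H. eapply fle_trans; [|apply finv_mono; exact H]. unfold fl.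
      rewrite <- J1. fold jm. rewrite <- (AJ U) at 1.
      apply finv_mono, (ex_unit O).
    + intros H. apply (proj1 O). rewrite <- FS.
      apply finv_mono, finv_mono, H.
  - intros U V. unfold fl. rewrite !finv_meet, FS. apply (ex_frob O).
Qed.


Lemma fx1_cond : pi2 \o (f \o k1) =l (fG \o pi1) \o k2.
Proof.
  assert (S := pb_square Hexa Hexa). ln. intros y. rewrite <- HfG, S. reflexivity.
Qed.
Definition fx1 : lmap K1 T := Ppair fx1_cond.

Lemma tau : sigma \o fx1 =l e1.
Proof.
  destruct (gP_pb X1) as [_ [_ un1]]. destruct Hf as [_ Hact].
  assert (Eq : f \o gact X1 \o e1 =l gact X2 \o (F \o e1)).
  { apply Hact; ln; intros y; [rewrite HF1|rewrite HF2]; reflexivity. }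
  assert (R1 := Ppair_1 Hexb rho_cond). assert (R2 := Ppair_2 Hexb rho_cond).
  assert (X1' := Ppair_1 Hexc fx1_cond). assert (X2' := Ppair_2 Hexb fx1_cond).
  assert (AE := ACT1E1). assert (QE := Q2E1).
  assert (Claim : rho \o fx1 =l h2 \o (F \o e1)).
  { apply (pb_uniq (Hf:=Hexb) (Hg:=Hexb)).
    - ln. intros y. unfold rho, fx1 in *. rewrite R1, X1', Hh21, <- Eq, AE. reflexivity.
    - ln. intros y. unfold rho, fx1 in *. rewrite R2, X2', Hh22, HF2, QE. reflexivity. }
  apply un1.
  - ln. intros y. rewrite Hs1, Claim, He21, HF1. reflexivity.
  - ln. intros y. rewrite Hs2. unfold fx1 in *. rewrite X2', QE. reflexivity.
Qed.

Lemma f_iso (eG : lmap M2 M1) (HeG1 : eG \o fG =l lid M1) (HeG2 : fG \o eG =l lid M2)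
  (HexGe : forall m, exG m = finv eG m) : is_iso f.
Proof.
  assert (O := f_oadj).
  assert (Ta : exa (ftop _) = ftop M1).
  { apply surj1. apply fle_antisym.
    - rewrite finv_top. apply top_max.
    - rewrite finv_top. apply (ex_unit Hexa). }
  assert (flT : fl (ftop _) = ftop _).
  { unfold fl. rewrite !finv_top. apply fle_antisym; [apply top_max|].
    unfold pex.
    eapply fle_trans; [|apply join_ub; exists (ftop _), (ftop _); split; [apply top_all|reflexivity]].
    unfold exc. rewrite Ta, HexGe, !finv_top, meet_top. apply fle_refl. }
  assert (flf : forall V, fl (finv f V) = V).
  { intros V. apply fle_antisym; [apply (ex_counit O)|].
    rewrite <- (meet_top (finv f V)), (ex_frob O), flT, meet_top. apply fle_refl. }
  assert (finj : forall a b, finv f a = finv f b -> a = b).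
  { intros a b H. rewrite <- (flf a), <- (flf b), H. reflexivity. }
  assert (TAU := tau). assert (AE := ACT1E1).
  assert (ffl : forall U, finv f (fl U) = U).
  { intros U. apply fle_antisym; [|apply (ex_unit O)].
    set (E := finv sigma (finv (gact X1) U)).
    assert (BC : fle (finv f (pex exc E)) (pex exa (finv fx1 E))).
    { unfold pex at 1. rewrite finv_join. apply join_le. intros w [t [[y [x [Exy ->]]] ->]].
      rewrite finv_meet.
      replace (finv f (finv pi2 (exc x))) with (finv pi1 (exa x)).
      2: { unfold exc. assert (H' := HfG (exG (exa x))). assert (H'' := HeG1 (exa x)).
           cbn [finv lcomp lid] in H', H''. rewrite <- H', HexGe, H''. reflexivity. }
      assert (Hm : fle (fmeet (finv k1 (finv f y)) (finv k2 x)) (finv fx1 E)).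
      { change (fle (fmeet (finv k1 (finv f y)) (finv k2 x)) (pairf (f \o k1) k2 E)).
        apply join_ub; exists y, x; split; [exact Exy|reflexivity]. }
      eapply fle_trans; [|apply (ex_mono (oadj_pp1 pi1 Hexa)); exact Hm].
      rewrite (ex_frob' (oadj_pp1 pi1 Hexa)). apply meet_mono; [apply fle_refl|].
      unfold pex.
      eapply fle_trans; [|apply join_ub; exists (ftop _), x; split; [simpl; apply meet_r|reflexivity]].
      rewrite meet_top. apply fle_refl. }
    eapply fle_trans; [exact BC|]. unfold E.
    ln. rewrite TAU, AE. apply (ex_counit (oadj_pp1 pi1 Hexa)). }
  unshelve eexists (@LMap (gX X2) (gX X1) fl _ _ _).
  - exact flT.
  - intros a b. apply finj. rewrite ffl, finv_meet, !ffl. reflexivity.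
  - intros S. apply finj. rewrite ffl, finv_join. apply join_ext.
    + intros x Sx. exists x. split; [|apply fle_refl].
      exists (fl x). split; [eauto|rewrite ffl; reflexivity].
    + intros x [s [[t [St ->]] ->]]. exists t. split; auto. rewrite ffl; apply fle_refl.
  - split; ln; intros y; [apply ffl|apply flf].
Qed.

Lemma f_open : is_open f.
Proof. exists fl. apply f_oadj. Qed.

End Opn.
End Main.


Lemma iso_down (G : groupoid) (X1 X2 : glocale G) (M1 M2 : frame)
  (pi1 : lmap (gX X1) M1) (pi2 : lmap (gX X2) M2)
  (P1 : principal pi1) (P2 : principal pi2)
  (f : lmap (gX X1) (gX X2)) (Hf : equivariant f)
  (fG : lmap M1 M2) (HfG : fG \o pi1 =l pi2 \o f) : is_iso f -> is_iso fG.
Proof.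
  intros [e [He1 He2]].
  assert (He : equivariant e).
  { destruct Hf as [Hanch Hact]. split.
    - ln. intros y. rewrite <- Hanch. apply He2.
    - intros W s s' H1 H2.
      assert (E : f \o gact X1 \o s' =l gact X2 \o s).
      { apply Hact.
        - ln. intros y. symmetry; apply H1.
        - ln. intros y. rewrite H2, He2. reflexivity. }
      ln. intros y. rewrite <- E, He1. reflexivity. }
  destruct (exist_desc P2 P1 He) as [eG HeG].
  destruct P1 as [_ [_ [_ surj1]]]. destruct P2 as [_ [_ [_ surj2]]].
  exists eG. split.
  - intros m. apply surj1. ln. rewrite HfG, HeG, He1. reflexivity.
  - intros m. apply surj2. ln. rewrite HeG, HfG, He2. reflexivity.
Qed.

Lemma open_down X1 X2 M1 M2 (pi1 : lmap X1 M1) (pi2 : lmap X2 M2) (f : lmap X1 X2)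
  (fG : lmap M1 M2) (HfG : fG \o pi1 =l pi2 \o f) (surj1 : is_surj pi1)
  exb (Hexb : oadj pi2 exb) : is_open f -> is_open fG.
Proof.
  intros [exf Hexf].
  assert (O := oadj_comp Hexf Hexb).
  exists (fun m => exb (exf (finv pi1 m))). split.
  - intros m n. rewrite (proj1 O). cbn [finv lcomp].
    assert (E := HfG n). cbn [finv lcomp] in E. rewrite <- E. split.
    + apply surj_le; auto.
    + apply finv_mono.
  - intros m n. rewrite finv_meet. assert (E := HfG n). cbn [finv lcomp] in E. rewrite E.
    apply (ex_frob O).
Qed.

Lemma oadj_iso X Y (f : lmap X Y) (e : lmap Y X) :
  e \o f =l lid X -> f \o e =l lid Y -> oadj f (finv e).
Proof.
  intros H1 H2. ln. split.
  - intros x y. split; intros H.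
    + rewrite <- (H1 x). apply finv_mono; auto.
    + rewrite <- (H2 y). apply finv_mono; auto.
  - intros x y. rewrite finv_meet, H2. reflexivity.
Qed.

Unset Implicit Arguments.

Theorem lemma3p3 (G : groupoid) (HG : open_groupoid G)
  (X1 X2 : glocale G) (M1 M2 : frame)
  (pi1 : lmap (gX X1) M1) (pi2 : lmap (gX X2) M2)
  (P1 : principal pi1) (P2 : principal pi2)
  (f : lmap (gX X1) (gX X2)) (Hf : equivariant f) :
  (exists fG : lmap M1 M2,
      fG \o pi1 =l pi2 \o f /\
      (forall g : lmap M1 M2, g \o pi1 =l pi2 \o f -> g =l fG)) /\
  (forall fG : lmap M1 M2, fG \o pi1 =l pi2 \o f ->
      (is_iso f <-> is_iso fG) /\ (is_open f <-> is_open fG)).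
Proof.
  split.
  - destruct (exist_desc P1 P2 Hf) as [fG HfG]. exists fG. split; auto.
    intros g Hg y. destruct P1 as [_ [_ [_ surj1]]]. apply surj1.
    assert (E1 := Hg y); assert (E2 := HfG y). cbn [finv lcomp] in E1, E2.
    rewrite E1, E2. reflexivity.
  - intros fG HfG.
    pose proof P1 as P1'. pose proof P2 as P2'.
    destruct P1' as [inv1 [iso1 [[exa Hexa] surj1]]].
    destruct P2' as [inv2 [iso2 [[exb Hexb] surj2]]].
    destruct (iso1 _ _ _ (pb_is_pullback Hexa Hexa)) as [h1 [Hh11 [Hh12 [e1 [He11 He12]]]]].
    destruct (iso2 _ _ _ (pb_is_pullback Hexb Hexb)) as [h2 [Hh21 [Hh22 [e2 [He21 He22]]]]].
    assert (Hs : gd G \o gq1 X1 =l ganch X2 \o (f \o gq2 X1)).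
    { destruct (gP_pb X1) as [sq1 _]. destruct Hf as [Hanch _].
      ln. intros y. rewrite Hanch. apply sq1. }
    destruct (gP_pb X2) as [_ [ex2 _]].
    destruct (ex2 _ _ _ Hs) as [F [HF1 HF2]].
    destruct (gP_pb X1) as [_ [ex1 _]].
    split; split.
    + apply (iso_down P1 P2 Hf HfG).
    + intros [eG [HeG1 HeG2]].
      assert (HexG := oadj_iso HeG1 HeG2).
      destruct (ex1 _ _ _ (sigma_cond Hf HfG Hexa Hh22 He22 HexG)) as [sigma [Hs1 Hs2]].
      exact (f_iso Hf surj1 Hh11 Hh12 He12 Hh21 Hh22 He21 He22 HF1 HF2 Hs1 Hs2 HeG1 HeG2
               (fun m => eq_refl)).
    + apply (open_down HfG surj1 Hexb).
    + intros [exG HexG].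
      destruct (ex1 _ _ _ (sigma_cond Hf HfG Hexa Hh22 He22 HexG)) as [sigma [Hs1 Hs2]].
      exact (f_open Hf Hh21 Hh22 He21 He22 Hs1 Hs2).
Qed.
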